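(* Let $G$ be a $3$-edge colorable cubic graph, and let $\{G_i\}$ be a decomposition of $G$ along nontrivial $2$-edge cuts or $3$-edge cuts. Then $K'(G,3)=\prod_i K'(G_i,3)$.
   Context: Graphs are finite; multiple edges allowed, loops not. Let $G$ be cubic. For a $3$-edge cut $E_C=\{s_{11}s_{21},s_{12}s_{22},s_{13}s_{23}\}$ with the $s_{1j}$ on one side and the $s_{2j}$ on the other, let $G_1',G_2'$ be the subgraphs induced on the two sides of $G\setminus E_C$; $G_i$ is obtained from $G_i'$ by adding a new vertex $v_i$ joined to $s_{i1},s_{i2},s_{i3}$. For a $2$-edge cut $E_C=\{s_{11}s_{21},s_{12}s_{22}\}$, $G_i$ is obtained from $G_i'$ by adding the edge $s_{i1}s_{i2}$. The cut is nontrivial if both $G_1$ and $G_2$ have fewer vertices than $G$. A decomposition of $G$ along such cuts is a collection of graphs obtained from $\{G\}$ by repeatedly replacing a member by the two graphs $G_1,G_2$ arising from a nontrivial $2$- or $3$-edge cut of it. A proper $3$-edge coloring uses colors $\{1,2,3\}$ with adjacent edges colored differently; an edge-Kempe chain (colors $a\neq b$) is a connected component of the subgraph of edges colored $a$ or $b$, and an edge-Kempe switch swaps $a,b$ on one chain. $K'(G,3)$ is the number of classes of proper $3$-edge colorings under the equivalence generated by edge-Kempe switches. *)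

(* Defs.v *)
From mathcomp Require Import all_boot.
Set Implicit Arguments. Unset Strict Implicit. Unset Printing Implicit Defensive.

Record mgraph := MGraph {
  vert : finType;
  edge : finType;
  src : edge -> vert;
  tgt : edge -> vert }.

Section Graphs.
Variable G : mgraph.

Definition loopless : Prop := forall e : edge G, src e != tgt e.

(* degree of v (= number of incident edges, the graph being loopless) *)
Definition incident (v : vert G) : {set edge G} :=
  [set e | (src e == v) || (tgt e == v)].

Definition cubic : Prop := loopless /\ forall v : vert G, #|incident v| = 3.

Definition adjacent (e f : edge G) : bool :=
  [|| src e == src f, src e == tgt f, tgt e == src f | tgt e == tgt f].

Definition coloring := {ffun edge G -> 'I_3}.

Definition proper (c : coloring) : bool :=
  [forall e, forall f, ((e != f) && adjacent e f) ==> (c e != c f)].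

Definition three_edge_colorable : Prop := exists c : coloring, proper c.

(* edges of the (a,b)-subgraph, and adjacency inside it; the edge-Kempe chain
   containing e is the set of edges f with connect (chain_rel c a b) e f *)
Definition chain_rel (c : coloring) (a b : 'I_3) : rel (edge G) :=
  fun e f => [&& (c e == a) || (c e == b), (c f == a) || (c f == b) & adjacent e f].

Definition swap (a b x : 'I_3) : 'I_3 :=
  if x == a then b else if x == b then a else x.

Definition kempe_switch (c : coloring) (a b : 'I_3) (e : edge G) : coloring :=
  [ffun f => if connect (chain_rel c a b) e f then swap a b (c f) else c f].

Definition kempe_step (c d : coloring) : bool :=
  [exists a, exists b, exists e,
     [&& a != b, (c e == a) || (c e == b) & d == kempe_switch c a b e]].

Definition kempe_equiv : rel coloring :=
  connect (fun c d => [&& proper c, proper d & kempe_step c d || kempe_step d c]).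

Definition Kprime : nat :=
  #|[set [set d | kempe_equiv c d] | c in [set c : coloring | proper c]]|.

Definition crossing (S : {set vert G}) : {set edge G} :=
  [set e | (src e \in S) != (tgt e \in S)].

(* 3-edge cut side S: G_1 = G[S] plus a new vertex (None) joined to the ends
   in S of the cut edges (i.e. the complement of S contracted to one vertex). *)
Definition split3_graph (S : {set vert G}) : mgraph :=
  @MGraph (Finite.clone (option {x : vert G | x \in S}) _)
          (Finite.clone ({e : edge G | (src e \in S) || (tgt e \in S)}) _)
          (fun e => insub (src (val e))) (fun e => insub (tgt (val e))).

(* 2-edge cut side S: G_1 = G[S] plus a new edge (None) joining x1 and x2. *)
Definition split2_graph (S : {set vert G}) (x1 x2 : {x : vert G | x \in S}) : mgraph :=
  @MGraph (Finite.clone ({x : vert G | x \in S}) _)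
          (Finite.clone (option {e : edge G | (src e \in S) && (tgt e \in S)}) _)
          (fun e => if e is Some e' then Sub (src (val e')) (proj1 (andP (valP e'))) else x1)
          (fun e => if e is Some e' then Sub (tgt (val e')) (proj2 (andP (valP e'))) else x2).

End Graphs.

Definition cut3_split (H H1 H2 : mgraph) : Prop :=
  exists S : {set vert H},
    #|crossing S| = 3 /\ H1 = split3_graph S /\ H2 = split3_graph (~: S).

Definition is_end (G : mgraph) (e : edge G) (v : vert G) : bool :=
  (src e == v) || (tgt e == v).

Definition cut2_split (H H1 H2 : mgraph) : Prop :=
  exists (S : {set vert H}) (e1 e2 : edge H)
         (x1 x2 : {x : vert H | x \in S}) (y1 y2 : {x : vert H | x \in ~: S}),
    [/\ e1 != e2, crossing S = [set e1; e2],
        is_end e1 (val x1) && is_end e2 (val x2),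
        is_end e1 (val y1) && is_end e2 (val y2) &
        H1 = split2_graph x1 x2 /\ H2 = split2_graph y1 y2].

Definition nontrivial_split (H H1 H2 : mgraph) : Prop :=
  (cut2_split H H1 H2 \/ cut3_split H H1 H2) /\
  #|vert H1| < #|vert H| /\ #|vert H2| < #|vert H|.

Inductive decomposition (G : mgraph) : seq mgraph -> Prop :=
| decomp_base : decomposition G [:: G]
| decomp_step (L1 L2 : seq mgraph) (H H1 H2 : mgraph) :
    decomposition G (L1 ++ H :: L2) -> nontrivial_split H H1 H2 ->
    decomposition G (L1 ++ H1 :: H2 :: L2).

(* Main.v *)
From Pilot Require Import Defs.
From mathcomp Require Import all_boot.
From mathcomp Require Import zify.
Set Implicit Arguments. Unset Strict Implicit. Unset Printing Implicit Defensive.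

Notation prop := Pilot.Defs.proper.


Definition sm (a b x y : 'I_3) : bool :=
  (y == x) || (((x == a) || (x == b)) && (y == swap a b x)).

Ltac c3 := case => [[|[|[|//]]] ?].
Ltac fin := move=> *; (done || (apply/eqP; done)).


Lemma smC a b x y : sm a b x y = sm a b y x.
Proof. by move: a b x y; do 4 c3; fin. Qed.
Lemma swapK a b : involutive (swap a b).
Proof. by move=> x; move: a b x; do 3 c3; fin. Qed.
Lemma swap_inj a b : injective (swap a b).
Proof. exact: can_inj (swapK a b). Qed.
Lemma swap_ab a b x y : a != b -> (x == a) || (x == b) -> (y == a) || (y == b) ->
  x != y -> swap a b x = y.
Proof. by move: a b x y; do 4 c3; fin. Qed.
Lemma swap_in a b x : (x == a) || (x == b) -> (swap a b x == a) || (swap a b x == b).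
Proof. by move: a b x; do 3 c3; fin. Qed.
Lemma swap_out a b x : ~~ ((x == a) || (x == b)) -> swap a b x = x.
Proof. by move: a b x; do 3 c3; fin. Qed.
Lemma sm_neq a b x y : sm a b x y -> y != x -> ((x == a) || (x == b)) && (y == swap a b x).
Proof. by rewrite /sm => /orP[->|]. Qed.
Lemma sm_swap a b x : sm a b x (swap a b x).
Proof. by move: a b x; do 3 c3; fin. Qed.
Lemma sm_refl a b x : sm a b x x.
Proof. by rewrite /sm eqxx. Qed.

Lemma neqC (T : eqType) (x y : T) : x != y -> y != x.
Proof. by rewrite eq_sym. Qed.

Section Basic.
Variable G : mgraph.
Implicit Types (c d : coloring G) (e f : edge G) (a b : 'I_3).

Lemma adjC e f : adjacent e f = adjacent f e.
Proof.
by apply/idP/idP; rewrite /adjacent => /or4P [] /eqP ->; rewrite eqxx ?orbT.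
Qed.

Lemma adjxx e : adjacent e e.
Proof. by rewrite /adjacent eqxx. Qed.

Lemma properP c :
  reflect (forall e f, e != f -> adjacent e f -> c e != c f) (prop c).
Proof.
apply: (iffP forallP) => [H e f ne af | H e].
  by move/forallP: (H e) => /(_ f); rewrite ne af.
apply/forallP => f; apply/implyP => /andP[ne af]; exact: H.
Qed.

Definition krel : rel (coloring G) :=
  fun c d => [&& prop c, prop d & kempe_step c d || kempe_step d c].

Lemma krel_sym : symmetric krel.
Proof. by move=> c d; rewrite /krel andbCA orbC. Qed.

Lemma keq_refl c : kempe_equiv c c.
Proof. exact: connect0. Qed.
Lemma keq_sym c d : kempe_equiv c d = kempe_equiv d c.
Proof. exact: (sym_connect_sym krel_sym). Qed.
Lemma keq_trans c1 c2 c3 : kempe_equiv c1 c2 -> kempe_equiv c2 c3 -> kempe_equiv c1 c3.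
Proof. exact: connect_trans. Qed.

Lemma chain_ab c a b e f : (c e == a) || (c e == b) ->
  connect (chain_rel c a b) e f -> (c f == a) || (c f == b).
Proof.
move=> He /connectP[p Hp ->]; elim/last_ind: p Hp => // p x _.
by rewrite rcons_path last_rcons => /andP[_ /and3P[_ ->]].
Qed.

Lemma kswitch_proper c a b e : prop c -> (c e == a) || (c e == b) ->
  prop (kempe_switch c a b e).
Proof.
move=> /properP Pc He; apply/properP => x y nxy axy; rewrite !ffunE.
have Hxy := Pc x y nxy axy.
case Kx: (connect _ e x); case Ky: (connect _ e y) => //.
- by rewrite (inj_eq (@swap_inj a b)).
- have Hx := chain_ab He Kx.
  case Hy: ((c y == a) || (c y == b)).
    have : connect (chain_rel c a b) e y.
      apply: connect_trans Kx (connect1 _); by rewrite /chain_rel Hx Hy axy.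
    by rewrite Ky.
  apply/eqP => E; have := swap_in Hx; rewrite E Hy //.
- have Hy := chain_ab He Ky.
  case Hx: ((c x == a) || (c x == b)).
    have : connect (chain_rel c a b) e x.
      apply: connect_trans Ky (connect1 _); by rewrite /chain_rel Hx Hy adjC axy.
    by rewrite Kx.
  apply/eqP => E; have := swap_in Hy; rewrite -E Hx //.
Qed.

Lemma kstep_sm c d : kempe_step c d ->
  exists a b, a != b /\ forall f, sm a b (c f) (d f).
Proof.
case/existsP=> a /existsP[b /existsP[e /and3P[nab He /eqP ->]]].
exists a, b; split => // f; rewrite ffunE.
case K: connect; last exact: sm_refl.
by rewrite /sm (chain_ab He K) eqxx orbT.
Qed.

Lemma kstep_sm2 c d : kempe_step c d || kempe_step d c ->
  exists a b, a != b /\ forall f, sm a b (c f) (d f).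
Proof.
case/orP => /kstep_sm [a [b [nab H]]]; exists a, b; split => // f.
by rewrite smC.
Qed.

Lemma swap_equiv a b c d : a != b -> prop c -> prop d ->
  (forall f, sm a b (c f) (d f)) -> kempe_equiv c d.
Proof.
move=> nab + Pd.
have [n] := ubnP #|[set f | c f != d f]|; elim: n c => // n IH c.
move=> Hn Pc Hs.
case: (pickP [pred f | c f != d f]) => [e /= He|H0]; last first.
  have -> : c = d by apply/ffunP => f; move: (H0 f) => /= /negbFE/eqP.
  exact: keq_refl.
have [Hab _] := andP (sm_neq (Hs e) (neqC He)).
set c' := kempe_switch c a b e.
have clos : forall f, connect (chain_rel c a b) e f -> c f != d f.
  move=> f K.
  suff : (e \in [pred g | c g != d g]) = (f \in [pred g | c g != d g]).
    by rewrite !inE He => <-.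
  apply: closed_connect K => x y /and3P[Hx Hy axy] /=.
  have cl : forall x y, (c x == a) || (c x == b) -> (c y == a) || (c y == b) ->
      adjacent x y -> c x != d x -> c y != d y.
    move=> x0 y0 Hx0 Hy0 a0 Nx; case: (eqVneq x0 y0) => [<- //|nxy].
    have cxy := (properP c Pc) _ _ nxy a0.
    apply/negP => /eqP Ey.
    have := sm_neq (Hs x0) (neqC Nx).
    rewrite Hx0 /= (swap_ab nab Hx0 Hy0 cxy) => /eqP Ex.
    by have := (properP d Pd) _ _ nxy a0; rewrite Ex Ey eqxx.
  apply/idP/idP; first exact: cl.
  by apply: cl => //; rewrite adjC.
have Pc' : prop c' by apply: kswitch_proper.
have Hs' : forall f, sm a b (c' f) (d f).
  move=> f; rewrite /c' ffunE; case K: connect; last exact: Hs.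
  have := sm_neq (Hs f) (neqC (clos f K)).
  by case/andP=> _ /eqP ->; apply: sm_refl.
apply: (@keq_trans _ c'); last first.
  apply: IH => //.
  have sub : [set f | c' f != d f] \subset [set f | c f != d f] :\ e.
    apply/subsetP => f; rewrite !inE /c' ffunE.
    case K: connect.
      have := sm_neq (Hs f) (neqC (clos f K)).
      by case/andP=> _ /eqP ->; rewrite eqxx.
    move=> ->; rewrite andbT; apply/eqP => Ef; move: K; rewrite Ef connect0.
    done.
  move: Hn; rewrite (cardsD1 e [set f | c f != d f]) inE He add1n ltnS.
  by apply: leq_ltn_trans; apply: subset_leq_card.
apply: connect1; rewrite /krel Pc Pc' /=; apply/orP; left.
apply/existsP; exists a; apply/existsP; exists b; apply/existsP; exists e.
by rewrite nab Hab eqxx.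
Qed.

End Basic.

Lemma card_sum (T : finType) (P : pred T) : #|[set x | P x]| = \sum_x (P x : nat).
Proof.
rewrite -sum1_card (eq_bigl P); last by move=> x; rewrite inE.
by rewrite big_mkcond; apply: eq_bigr => x _; case: (P x).
Qed.

Lemma sum_eq1 (T : finType) (x : T) (P : pred T) :
  \sum_v ((x == v) && P v : nat) = P x.
Proof.
rewrite (bigD1 x) //= eqxx big1 ?addn0 // => v; rewrite eq_sym => /negbTE ->.
done.
Qed.

Section Parity.
Variable G : mgraph.
Hypothesis cub : cubic G.
Variable c : coloring G.
Hypothesis Pc : prop c.

Lemma one_edge a v : #|[set e | (c e == a) && (e \in incident v)]| = 1.
Proof.
have [ll deg] := cub.
have adj : forall e f, e \in incident v -> f \in incident v -> adjacent e f.
  move=> e f; rewrite !inE /adjacent => /orP[]/eqP-> /orP[]/eqP->;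
  by rewrite eqxx ?orbT.
have inj : {in incident v &, injective c}.
  move=> e f He Hf E; apply/eqP; apply/negP => /negP nef.
  by move/forallP: Pc => /(_ e)/forallP/(_ f); rewrite nef adj //= E eqxx.
have im : c @: incident v = [set: 'I_3].
  apply/eqP; rewrite eqEcard subsetT cardsT card_ord card_in_imset //.
  by rewrite deg.
apply/eqP; rewrite eqn_leq; apply/andP; split.
  apply/card_le1_eqP => e f; rewrite !inE => /andP[/eqP Ea Ie] /andP[/eqP Eb If].
  by apply: inj; rewrite ?inE ?Ie ?If ?Ea ?Eb.
apply/card_gt0P.
have : a \in c @: incident v by rewrite im inE.
by case/imsetP => e He Ea; exists e; rewrite inE He Ea eqxx.
Qed.

Lemma parity a (S : {set vert G}) :
  odd #|[set e in crossing S | c e == a]| = odd #|S|.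
Proof.
have [ll deg] := cub.
have E1 : #|S| = \sum_e \sum_v ((v \in S) && ((c e == a) && (e \in incident v)) : nat).
  rewrite exchange_big /= -sum1_card big_mkcond /=; apply: eq_bigr => v _.
  case: (v \in S) => /=; last by rewrite big1.
  by rewrite -card_sum one_edge.
have E2 : forall e, \sum_v ((v \in S) && ((c e == a) && (e \in incident v)) : nat)
     = (c e == a) * ((src e \in S) + (tgt e \in S)).
  move=> e; case: (c e == a); last by rewrite big1 // => v; rewrite andbF.
  rewrite mul1n -(sum_eq1 (src e) (mem S)) -(sum_eq1 (tgt e) (mem S)) -big_split /=.
  apply: eq_bigr => v _; rewrite inE /=.
  have := ll e.
  case Hs: (src e == v); case Ht: (tgt e == v) => /=;
    rewrite ?andbT ?andbF ?addn0 //.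
  by rewrite (eqP Hs) (eqP Ht) eqxx.
rewrite E1 (eq_bigr _ (fun e _ => E2 e)) card_sum.
have E3 : forall e, (c e == a) * ((src e \in S) + (tgt e \in S)) =
   2 * ((c e == a) && (src e \in S) && (tgt e \in S)) +
   ((e \in crossing S) && (c e == a)).
  by move=> e; rewrite inE; case: (c e == a); case: (src e \in S); case: (tgt e \in S).
rewrite (eq_bigr _ (fun e _ => E3 e)) big_split /= -big_distrr /= oddD oddM /=.
done.
Qed.

End Parity.

Definition restr (G G' : mgraph) (phi : edge G' -> edge G) (c : coloring G) : coloring G' :=
  [ffun e => c (phi e)].
Definition pc (G : mgraph) (t : 'I_3 -> 'I_3) (c : coloring G) : coloring G :=
  [ffun e => t (c e)].

Lemma pc_proper (G : mgraph) t (c : coloring G) : injective t -> prop c -> prop (pc t c).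
Proof.
move=> it /properP Pc; apply/properP => e f nef aef; rewrite !ffunE.
by rewrite (inj_eq it); apply: Pc.
Qed.

Lemma keq_restr (G G' : mgraph) (phi : edge G' -> edge G)
  (Hr : forall c, prop c -> prop (restr phi c)) (c d : coloring G) :
  kempe_equiv c d -> kempe_equiv (restr phi c) (restr phi d).
Proof.
move/connectP=> [p Hp ->]; elim: p c Hp => [|x p IH] c /=; first by move=> _; apply: keq_refl.
case/andP=> /and3P[Pc Px Hk] Hp.
apply: keq_trans (IH _ Hp).
have [a [b [nab Hs]]] := kstep_sm2 Hk.
apply: (swap_equiv nab); try exact: Hr.
by move=> f; rewrite !ffunE.
Qed.

Lemma swap_fix x y z : z != x -> z != y -> swap x y z = z.
Proof. by move: x y z; do 3 c3; fin. Qed.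

Lemma three (a b c x : 'I_3) : a != b -> a != c -> b != c -> [|| x == a, x == b | x == c].
Proof. by move: a b c x; do 4 c3; fin. Qed.

Lemma perm_fix (r : 'I_3 -> 'I_3) y0 : injective r -> r y0 = y0 ->
  exists a b, a != b /\ forall w, sm a b w (r w).
Proof.
move=> ir ry.
case: (pickP (fun z => r z != z)) => [z Hz | H]; last first.
  exists ord0, (@Ordinal 3 1 isT); split => // w.
  by move: (H w) => /= /negbFE/eqP ->; apply: sm_refl.
have zy : y0 != z by apply/eqP => E; move: Hz; rewrite /= -E ry eqxx.
have rzy : y0 != r z by rewrite -{1}ry (inj_eq ir).
have rzz : z != r z by rewrite eq_sym.
have rrz : r (r z) = z.
  case/or3P: (three (r (r z)) zy rzy rzz) => /eqP E //.
  - have E' : r (r z) = r y0 by rewrite ry.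
    by move: rzy; rewrite (ir _ _ E') eqxx.
  - by move: (ir _ _ E) => E'; move: rzz; rewrite E' eqxx.
exists z, (r z); split => // w.
case/or3P: (three w zy rzy rzz) => /eqP ->.
- by rewrite ry; apply: sm_refl.
- by rewrite /sm /swap !eqxx orbT.
- by rewrite rrz /sm /swap (eq_sym (r z) z) (negbTE rzz) !eqxx orbT.
Qed.

Section Lift.
Variables G G1 G2 : mgraph.
Variable phi1 : edge G1 -> edge G.
Variable phi2 : edge G2 -> edge G.
Variable I : finType.
Variable iota1 : I -> edge G1.
Variable iota2 : I -> edge G2.
Hypothesis Hr1 : forall c, prop c -> prop (restr phi1 c).
Hypothesis Hr2 : forall c, prop c -> prop (restr phi2 c).
Hypothesis Hcompat : forall c, prop c -> forall i, c (phi1 (iota1 i)) = c (phi2 (iota2 i)).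
Hypothesis Hglue : forall c1 c2, prop c1 -> prop c2 -> (forall i, c1 (iota1 i) = c2 (iota2 i)) ->
  exists c, [/\ prop c, restr phi1 c = c1 & restr phi2 c = c2].
Hypothesis Hcover : forall e, (exists e1, e = phi1 e1) \/ (exists e2, e = phi2 e2).
Hypothesis Hadj1 : forall i j, i != j -> (iota1 i != iota1 j) && adjacent (iota1 i) (iota1 j).

Lemma step1 (c : coloring G) (x : coloring G1) a b :
  prop c -> prop x -> a != b -> (forall f, sm a b (restr phi1 c f) (x f)) ->
  exists c1, [/\ kempe_equiv c c1, prop c1, restr phi1 c1 = x,
     kempe_equiv (restr phi2 c) (restr phi2 c1) &
     exists t, injective t /\ restr phi2 c1 = pc t (restr phi2 c)].
Proof.
move=> Pc Px nab Hs.
have Pc1 := Hr1 Pc.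
have [s [sinj Hss Hsi]] : exists s, [/\ injective s, forall y, sm a b y (s y) &
    forall i, x (iota1 i) = s (restr phi1 c (iota1 i))].
  case: (pickP (fun i => x (iota1 i) != restr phi1 c (iota1 i))) => [i0 Hi0 | H].
    exists (swap a b); split; [exact: swap_inj | exact: sm_swap |] => i.
    have [Hab0 /eqP E0] := andP (sm_neq (Hs (iota1 i0)) Hi0).
    case: (eqVneq i i0) => [-> //| nii].
    have [ne ad] := andP (Hadj1 nii).
    case Hu: ((restr phi1 c (iota1 i) == a) || (restr phi1 c (iota1 i) == b)); last first.
      rewrite swap_out ?Hu //.
      case: (eqVneq (x (iota1 i)) (restr phi1 c (iota1 i))) => // Ne.
      by have := sm_neq (Hs (iota1 i)) Ne; rewrite Hu.
    case: (eqVneq (x (iota1 i)) (restr phi1 c (iota1 i))) => Ne; last first.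
      by have /andP[_ /eqP] := sm_neq (Hs (iota1 i)) Ne.
    exfalso.
    have cne : restr phi1 c (iota1 i0) != restr phi1 c (iota1 i).
      by apply: (properP _ Pc1); [rewrite eq_sym | rewrite adjC].
    have := (properP _ Px) _ _ ne ad.
    by rewrite Ne E0 (swap_ab nab Hab0 Hu cne) eqxx.
  exists id; split => //; first exact: sm_refl.
  by move=> i; move: (H i) => /= /negbFE/eqP.
have Pc2 : prop (pc s (restr phi2 c)) by apply: pc_proper => //; exact: Hr2.
have Hcomp : forall i, x (iota1 i) = pc s (restr phi2 c) (iota2 i).
  by move=> i; rewrite Hsi !ffunE Hcompat.
have [c1 [P1 R1 R2]] := Hglue Px Pc2 Hcomp.
exists c1; split => //.
- apply: (swap_equiv nab Pc P1) => e.
  case: (Hcover e) => [[e1 ->]|[e2 ->]].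
    by move: (Hs e1); rewrite -R1 !ffunE.
  by move: (Hss (c (phi2 e2))); have := congr1 (fun f : coloring G2 => f e2) R2; rewrite !ffunE => ->.
- rewrite R2; apply: (swap_equiv nab (Hr2 Pc) Pc2) => e.
  by rewrite [pc _ _ _]ffunE; apply: Hss.
- by exists s.
Qed.

Lemma lift1 (c : coloring G) (y : coloring G1) :
  prop c -> kempe_equiv (restr phi1 c) y ->
  exists c1, [/\ kempe_equiv c c1, prop c1, restr phi1 c1 = y,
     kempe_equiv (restr phi2 c) (restr phi2 c1) &
     exists t, injective t /\ restr phi2 c1 = pc t (restr phi2 c)].
Proof.
move=> + /connectP[p Hp ->]; elim: p c Hp => [|x p IH] c /=.
  move=> _ Pc; exists c; split => //; try exact: keq_refl.
  by exists id; split => //; apply/ffunP => e; rewrite [pc _ _ _]ffunE.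
case/andP=> /and3P[_ Px Hk] Hp Pc.
have [a [b [nab Hs]]] := kstep_sm2 Hk.
have [c1 [K1 P1 R1 K2 [t [it Et]]]] := step1 Pc Px nab Hs.
rewrite -R1 in Hp.
have [c2 [K1' P2 R1' K2' [t' [it' Et']]]] := IH c1 Hp P1.
exists c2; split => //.
- exact: keq_trans K1 K1'.
- by rewrite R1'; case: (p) => //.
- exact: keq_trans K2 K2'.
- exists (t' \o t); split; first exact: inj_comp.
  by rewrite Et' Et; apply/ffunP => e; rewrite !ffunE.
Qed.

End Lift.

Definition cls (H : mgraph) (c : coloring H) : {set coloring H} := [set d | kempe_equiv c d].

Lemma cls_eq (H : mgraph) (c d : coloring H) : cls c = cls d <-> kempe_equiv c d.
Proof.
split => [E | K].
  have : d \in cls d by rewrite inE keq_refl.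
  by rewrite -E inE.
apply/setP => x; rewrite !inE; apply/idP/idP => Kx.
  by apply: keq_trans Kx; rewrite keq_sym.
exact: keq_trans K Kx.
Qed.

Lemma card_im_eq (T U V : finType) (A : {set T}) (f : T -> U) (g : T -> V) :
  {in A &, forall x y, (f x = f y) <-> (g x = g y)} -> #|f @: A| = #|g @: A|.
Proof.
move=> H.
set h := fun x => (f x, g x).
have -> : f @: A = fst @: (h @: A) by rewrite -imset_comp.
have -> : g @: A = snd @: (h @: A) by rewrite -imset_comp.
have E1 : #|fst @: (h @: A)| = #|h @: A|.
  apply: card_in_imset => p q /imsetP[x Hx ->] /imsetP[y Hy ->] /= E.
  by rewrite /h E; move/(H x y Hx Hy): E => ->.
have E2 : #|snd @: (h @: A)| = #|h @: A|.
  apply: card_in_imset => p q /imsetP[x Hx ->] /imsetP[y Hy ->] /= E.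
  by rewrite /h E; move/(H x y Hx Hy): (E) => ->.
by rewrite E1 E2.
Qed.

Section Main.
Variables G G1 G2 : mgraph.
Variable phi1 : edge G1 -> edge G.
Variable phi2 : edge G2 -> edge G.
Variable I : finType.
Variable iota1 : I -> edge G1.
Variable iota2 : I -> edge G2.
Variable i0 : I.
Hypothesis Hr1 : forall c, prop c -> prop (restr phi1 c).
Hypothesis Hr2 : forall c, prop c -> prop (restr phi2 c).
Hypothesis Hcompat : forall c, prop c -> forall i, c (phi1 (iota1 i)) = c (phi2 (iota2 i)).
Hypothesis Hglue : forall c1 c2, prop c1 -> prop c2 -> (forall i, c1 (iota1 i) = c2 (iota2 i)) ->
  exists c, [/\ prop c, restr phi1 c = c1 & restr phi2 c = c2].
Hypothesis Hcover : forall e, (exists e1, e = phi1 e1) \/ (exists e2, e = phi2 e2).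
Hypothesis Hadj1 : forall i j, i != j -> (iota1 i != iota1 j) && adjacent (iota1 i) (iota1 j).
Hypothesis Hadj2 : forall i j, i != j -> (iota2 i != iota2 j) && adjacent (iota2 i) (iota2 j).

Let Hcompat' c (Pc : prop c) i : c (phi2 (iota2 i)) = c (phi1 (iota1 i)).
Proof. by rewrite Hcompat. Qed.
Let Hglue' c2 c1 : prop c2 -> prop c1 -> (forall i, c2 (iota2 i) = c1 (iota1 i)) ->
  exists c, [/\ prop c, restr phi2 c = c2 & restr phi1 c = c1].
Proof.
move=> P2 P1 H; have [c [Pc R1 R2]] := Hglue P1 P2 (fun i => esym (H i)).
by exists c.
Qed.
Let Hcover' e : (exists e2, e = phi2 e2) \/ (exists e1, e = phi1 e1).
Proof. by case: (Hcover e); [right|left]. Qed.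

Lemma lift2 (c : coloring G) (y : coloring G2) :
  prop c -> kempe_equiv (restr phi2 c) y ->
  exists c1, [/\ kempe_equiv c c1, prop c1, restr phi2 c1 = y,
     kempe_equiv (restr phi1 c) (restr phi1 c1) &
     exists t, injective t /\ restr phi1 c1 = pc t (restr phi1 c)].
Proof. exact: (lift1 Hr2 Hr1 Hcompat' Hglue' Hcover' Hadj2). Qed.

Lemma inj_iota (H : mgraph) (io : I -> edge H) (c : coloring H) :
  (forall i j, i != j -> (io i != io j) && adjacent (io i) (io j)) ->
  prop c -> injective (fun i => c (io i)).
Proof.
move=> Ha Pc i j E; apply/eqP; apply/negP => /negP nij.
have [ne ad] := andP (Ha _ _ nij).
by have := (properP _ Pc) _ _ ne ad; rewrite E eqxx.
Qed.

Lemma align (c1 : coloring G1) (c2 : coloring G2) : prop c1 -> prop c2 ->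
  exists c2', [/\ prop c2', kempe_equiv c2 c2' & forall i, c1 (iota1 i) = c2' (iota2 i)].
Proof.
move=> P1; have [n] := ubnP #|[set i | c1 (iota1 i) != c2 (iota2 i)]|.
elim: n c2 => // n IH c2 Hn P2.
case: (pickP [pred i | c1 (iota1 i) != c2 (iota2 i)]) => [i /= Hi | H0]; last first.
  exists c2; split => //; first exact: keq_refl.
  by move=> i; move: (H0 i) => /= /negbFE/eqP.
set x := c2 (iota2 i); set y := c1 (iota1 i).
have nxy : x != y by rewrite eq_sym.
set c2' := pc (swap x y) c2.
have P2' : prop c2' by apply: pc_proper => //; exact: swap_inj.
have K : kempe_equiv c2 c2'.
  apply: (swap_equiv nxy P2 P2') => e; rewrite ffunE; exact: sm_swap.
have [c3 [P3 K3 H3]] : exists c3, [/\ prop c3, kempe_equiv c2' c3 &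
    forall i, c1 (iota1 i) = c3 (iota2 i)].
  apply: IH P2'.
  have sub : [set j | c1 (iota1 j) != c2' (iota2 j)] \subset
             [set j | c1 (iota1 j) != c2 (iota2 j)] :\ i.
    apply/subsetP => j; rewrite !inE /c2' ffunE.
    case: (eqVneq j i) => [->|nji] /=.
      by rewrite /x /y /swap eqxx eqxx.
    apply: contra => /eqP E.
    have := inj_iota Hadj1 P1; have := inj_iota Hadj2 P2 => i2 i1.
    rewrite -E swap_fix //.
      rewrite E /x; apply/eqP => E2.
      by move: nji; rewrite (i2 j i E2) eqxx.
    rewrite /y; apply/eqP => E2.
    by move: nji; rewrite (i1 j i E2) eqxx.
  move: Hn; rewrite (cardsD1 i [set j | c1 (iota1 j) != c2 (iota2 j)]) inE Hi add1n ltnS.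
  by apply: leq_ltn_trans; apply: subset_leq_card.
by exists c3; split => //; apply: keq_trans K K3.
Qed.

Lemma surj (c1 : coloring G1) (c2 : coloring G2) : prop c1 -> prop c2 ->
  exists c, [/\ prop c, kempe_equiv (restr phi1 c) c1 & kempe_equiv (restr phi2 c) c2].
Proof.
move=> P1 P2; have [c2' [P2' K H]] := align P1 P2.
have [c [Pc R1 R2]] := Hglue P1 P2' H.
by exists c; rewrite R1 R2 keq_refl keq_sym.
Qed.

Lemma inj (c d : coloring G) : prop c -> prop d ->
  kempe_equiv (restr phi1 c) (restr phi1 d) -> kempe_equiv (restr phi2 c) (restr phi2 d) ->
  kempe_equiv c d.
Proof.
move=> Pc Pd K1 K2.
have [c' [Kc' Pc' R1' K2' _]] := lift1 Hr1 Hr2 Hcompat Hglue Hcover Hadj1 Pc K1.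
have K2'' : kempe_equiv (restr phi2 c') (restr phi2 d).
  by apply: keq_trans K2; rewrite keq_sym.
have [c'' [Kc'' Pc'' R2'' _ [r [ir Er]]]] := lift2 Pc' K2''.
apply: keq_trans Kc' (keq_trans Kc'' _).
have ry : r (d (phi1 (iota1 i0))) = d (phi1 (iota1 i0)).
  have := Hcompat Pc'' i0.
  have := congr1 (fun f : coloring G1 => f (iota1 i0)) Er.
  have := congr1 (fun f : coloring G2 => f (iota2 i0)) R2''.
  rewrite R1' !ffunE => -> -> E; by rewrite E Hcompat.
have [a [b [nab Hab]]] := perm_fix ir ry.
apply: (swap_equiv nab Pc'' Pd) => e; rewrite smC.
case: (Hcover e) => [[e1 ->]|[e2 ->]].
  have := congr1 (fun f : coloring G1 => f e1) Er; rewrite R1' !ffunE => ->.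
  exact: Hab.
have := congr1 (fun f : coloring G2 => f e2) R2''; rewrite !ffunE => ->.
exact: sm_refl.
Qed.

Theorem Kprime_split : Kprime G = Kprime G1 * Kprime G2.
Proof.
rewrite /Kprime -cardsX.
set P := [set c : coloring G | prop c].
set P1 := [set c : coloring G1 | prop c].
set P2 := [set c : coloring G2 | prop c].
have -> : #|[set [set d | kempe_equiv c d] | c in P]| =
    #|[set (cls (restr phi1 c), cls (restr phi2 c)) | c in P]|.
  apply: card_im_eq => c d; rewrite !inE => Pc Pd; split.
    move/(cls_eq c d) => K; congr pair; apply/cls_eq; exact: keq_restr.
  case=> /cls_eq K1 /cls_eq K2; apply/cls_eq; exact: inj.
apply: eq_card => -[K1 K2]; rewrite !inE /=.
apply/imsetP/andP.
  case=> c; rewrite inE => Pc [-> ->]; split; apply/imsetP.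
    by exists (restr phi1 c); rewrite // inE; apply: Hr1.
  by exists (restr phi2 c); rewrite // inE; apply: Hr2.
case=> /imsetP[c1 + ->] /imsetP[c2 + ->]; rewrite !inE => P1c P2c.
have [c [Pc L1 L2]] := surj P1c P2c.
exists c; first by rewrite inE.
have E1 := proj2 (cls_eq _ _) L1; have E2 := proj2 (cls_eq _ _) L2.
by rewrite /cls in E1 E2; rewrite /cls E1 E2.
Qed.

End Main.

Lemma others (a : 'I_3) : exists b c : 'I_3, [/\ a != b, a != c & b != c].
Proof.
case: a => [[|[|[|//]]] ?].
- by exists (@Ordinal 3 1 isT), (@Ordinal 3 2 isT).
- by exists (@Ordinal 3 0 isT), (@Ordinal 3 2 isT).
- by exists (@Ordinal 3 0 isT), (@Ordinal 3 1 isT).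
Qed.

Lemma sum3 (n : 'I_3 -> nat) a b c : a != b -> a != c -> b != c ->
  n a + n b + n c <= \sum_x n x.
Proof.
move=> ab ac bc.
rewrite (bigD1 a) //= (bigD1 b) /=; last by rewrite eq_sym ab.
rewrite (bigD1 c) /=; last by rewrite eq_sym ac eq_sym bc.
by rewrite !addnA leq_addr.
Qed.

Lemma count3 (n : 'I_3 -> nat) p a : (forall b, odd (n b) = p) -> 2 <= n a ->
  \sum_b n b = 3 -> False.
Proof.
move=> Hp Ha Hs.
case: p Hp => Hp.
  have [b [c [ab ac bc]]] := others a.
  have := sum3 n ab ac bc; rewrite Hs.
  have : n a != 2 by apply/eqP => E; move: (Hp a); rewrite E.
  have := odd_gt0 (eq_ind _ id (Hp b) _ erefl).
  have := odd_gt0 (eq_ind _ id (Hp c) _ erefl).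
  move: Ha; clear; lia.
have : ~~ odd (\sum_b n b).
  apply: (big_ind (fun x => ~~ odd x)) => //.
    by move=> x y; rewrite oddD => /negbTE -> /negbTE ->.
  by move=> b _; rewrite Hp.
by rewrite Hs.
Qed.

Lemma count2 (n : 'I_3 -> nat) p a b : (forall c, odd (n c) = p) -> 1 <= n a -> 1 <= n b ->
  a != b -> \sum_c n c = 2 -> False.
Proof.
move=> Hp Ha Hb ab Hs.
have [c [ac bc]] : exists c, a != c /\ b != c.
  have [b' [c' [ab' ac' bc']]] := others a.
  case: (eqVneq b b') => [->|nb]; first by exists c'.
  by exists b'.
have := sum3 n ab ac bc; rewrite Hs.
case: p Hp => Hp.
  have := odd_gt0 (eq_ind _ id (Hp c) _ erefl).
  move: Ha Hb; clear; lia.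
have : n a != 1 by apply/eqP => E; move: (Hp a); rewrite E.
have : n b != 1 by apply/eqP => E; move: (Hp b); rewrite E.
move: Ha Hb; clear; lia.
Qed.

Lemma sum_colors (G : mgraph) (c : coloring G) (A : {set edge G}) :
  \sum_a #|[set g in A | c g == a]| = #|A|.
Proof.
under eq_bigr => a _ do rewrite (card_sum (fun g => (g \in A) && (c g == a))).
have -> : #|A| = \sum_g ((g \in A) : nat).
  by rewrite -sum1_card big_mkcond /=; apply: eq_bigr => g _; case: (g \in A).
rewrite exchange_big /=; apply: eq_bigr => g _.
under eq_bigr => a _ do rewrite andbC.
exact: sum_eq1.
Qed.

Section CutColors.
Variable H : mgraph.
Hypothesis cub : cubic H.
Variable c : coloring H.
Hypothesis Pc : prop c.

Lemma cut3_inj (T : {set vert H}) e f : #|crossing T| = 3 ->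
  e \in crossing T -> f \in crossing T -> e != f -> c e != c f.
Proof.
move=> H3 He Hf nef; apply/eqP => E.
pose n a := #|[set g in crossing T | c g == a]|.
apply: (@count3 n (odd #|T|) (c e)).
- by move=> b; rewrite /n parity.
- apply: (@leq_trans #|[set e; f]|); first by rewrite cards2 nef.
  rewrite /n; apply: subset_leq_card; apply/subsetP => x.
  by rewrite !inE => /orP[]/eqP->; rewrite ?E eqxx andbT; [move: He | move: Hf]; rewrite inE.
- by rewrite /n sum_colors.
Qed.

Lemma cut2_eq (T : {set vert H}) e1 e2 : crossing T = [set e1; e2] -> e1 != e2 ->
  c e1 = c e2.
Proof.
move=> HT ne; apply/eqP/negP => /negP E.
pose n a := #|[set g in crossing T | c g == a]|.
apply: (@count2 n (odd #|T|) (c e1) (c e2)) => //.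
- by move=> b; rewrite /n parity.
- by apply/card_gt0P; exists e1; rewrite inE HT !inE !eqxx.
- by apply/card_gt0P; exists e2; rewrite inE HT !inE !eqxx orbT.
- by rewrite /n sum_colors HT cards2 ne.
Qed.

End CutColors.

Section Side3.
Variable H : mgraph.
Variable T : {set vert H}.
Notation G1 := (split3_graph T).

Lemma insub_eq (x y : vert H) :
  (insub x == insub y :> option {v | v \in T}) = (x == y) || ((x \notin T) && (y \notin T)).
Proof.
case: insubP => [u xu ux|nx]; case: insubP => [v yv vy|ny] /=.
- by rewrite (inj_eq (@Some_inj _)) -(inj_eq val_inj) ux vy xu orbF.
- apply/esym/negbTE; apply/negP => /orP[/eqP E|]; first by move: ny; rewrite -E xu.
  by rewrite xu.
- apply/esym/negbTE; apply/negP => /orP[/eqP E|]; first by move: nx; rewrite E yv.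
  by rewrite yv andbF.
- by rewrite nx ny orbT.
Qed.

Lemma insub_none (x : vert H) : (insub x == None :> option {v | v \in T}) = (x \notin T).
Proof. by case: insubP => [u xu _|nx] /=; rewrite ?xu ?nx. Qed.

Lemma insub_some (x : vert H) (v : {v | v \in T}) :
  (insub x == Some v :> option {v | v \in T}) = (x == val v).
Proof. by rewrite -{1}(valK v) insub_eq (valP v) andbF orbF. Qed.

Lemma adj3 (x y : edge G1) : adjacent (val x) (val y) -> adjacent x y.
Proof.
rewrite /adjacent /= !insub_eq.
by case/or4P => ->; rewrite ?orbT.
Qed.

Lemma cross_of (x : edge G1) :
  (src (val x) \notin T) || (tgt (val x) \notin T) -> val x \in crossing T.
Proof.
move: (valP x); rewrite inE /=.
by case: (src (val x) \in T); case: (tgt (val x) \in T).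
Qed.

Hypothesis cub : cubic H.
Hypothesis H3 : #|crossing T| = 3.

Lemma r3_proper (c : coloring H) : prop c -> prop (restr (fun x : edge G1 => val x) c).
Proof.
move=> Pc; apply/properP => x y nxy; rewrite !ffunE.
have nv : val x != val y by rewrite (inj_eq val_inj).
case: (boolP (adjacent (val x) (val y))) => A Hadj.
  exact: (properP _ Pc).
apply: (cut3_inj cub Pc H3 _ _ nv).
- move: Hadj; rewrite /adjacent /= !insub_eq.
  case/or4P => /orP[E|/andP[h1 h2]]; first [by move: A; rewrite /adjacent /= E ?orbT | by apply: cross_of => /=; rewrite ?h1 ?h2 /= ?orbT].

- move: Hadj; rewrite /adjacent /= !insub_eq.
  case/or4P => /orP[E|/andP[h1 h2]]; first [by move: A; rewrite /adjacent /= E ?orbT | by apply: cross_of => /=; rewrite ?h1 ?h2 /= ?orbT].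

Qed.

Lemma cubic3 : cubic G1.
Proof.
have [ll deg] := cub.
split.
  move=> x; rewrite /= insub_eq negb_or (ll (val x)) /=.
  by move: (valP x) => /=; case: (_ \in T); case: (_ \in T).
case => [v|].
  rewrite -(deg (val v)) -(card_imset _ val_inj); apply: eq_card => e.
  apply/imsetP/idP.
    by case=> x; rewrite inE /= !insub_some => Hx ->; rewrite inE.
  rewrite inE => He.
  have p : (src e \in T) || (tgt e \in T).
    by case/orP: He => /eqP ->; rewrite (valP v) ?orbT.
  exists (Sub e p : edge G1) => //.
  by rewrite inE /= !insub_some.
rewrite -H3 -(card_imset _ val_inj); apply: eq_card => e.
apply/imsetP/idP.
  case=> x; rewrite inE /= !insub_none => Hx ->.
  by have := cross_of Hx.
rewrite inE => He.
have p : (src e \in T) || (tgt e \in T).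
  by move: He; case: (_ \in T); case: (_ \in T).
exists (Sub e p : edge G1) => //.
rewrite inE /= !insub_none.
by move: He; case: (_ \in T); case: (_ \in T).
Qed.

End Side3.

Lemma cross_compl (H : mgraph) (S : {set vert H}) : crossing (~: S) = crossing S.
Proof.
by apply/setP => e; rewrite !inE; case: (src e \in S); case: (tgt e \in S).
Qed.

Lemma cross_end (H : mgraph) (T : {set vert H}) e : e \in crossing T ->
  (src e \in T) || (tgt e \in T).
Proof. by rewrite inE; case: (src e \in T); case: (tgt e \in T). Qed.

Lemma cross_end2 (H : mgraph) (T : {set vert H}) e : e \in crossing T ->
  (src e \in ~: T) || (tgt e \in ~: T).
Proof. by rewrite -cross_compl; apply: cross_end. Qed.

Lemma adj_cross (H : mgraph) (T : {set vert H}) (x y : edge (split3_graph T)) :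
  val x \in crossing T -> val y \in crossing T -> adjacent x y.
Proof.
rewrite /adjacent /= !insub_eq !inE.
case: (src (val x) \in T); case: (tgt (val x) \in T);
case: (src (val y) \in T); case: (tgt (val y) \in T) => //= *; by rewrite ?orbT.
Qed.

Lemma side3_prop (H : mgraph) (T : {set vert H}) (c : coloring H)
  (c1 : coloring (split3_graph T)) :
  prop c1 -> restr (fun x : edge (split3_graph T) => val x) c = c1 ->
  forall e f p, e != f -> p \in T ->
  (p == src e) || (p == tgt e) -> (p == src f) || (p == tgt f) -> c e != c f.
Proof.
move=> P1 R e f p nef pT Ee Ef.
have pe : (src e \in T) || (tgt e \in T).
  by case/orP: Ee => /eqP <-; rewrite pT ?orbT.
have pf : (src f \in T) || (tgt f \in T).
  by case/orP: Ef => /eqP <-; rewrite pT ?orbT.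
have Ce := congr1 (fun g : coloring _ => g (Sub e pe : edge (split3_graph T))) R.
have Cf := congr1 (fun g : coloring _ => g (Sub f pf : edge (split3_graph T))) R.
rewrite /= !ffunE /= in Ce Cf; rewrite Ce Cf.
apply: (properP _ P1).
  by rewrite -(inj_eq val_inj).
apply: adj3 => /=; rewrite /adjacent.
by case/orP: Ee => /eqP <-; case/orP: Ef => /eqP <-; rewrite eqxx ?orbT.
Qed.

Section Cut3Inst.
Variable H : mgraph.
Variable S : {set vert H}.
Hypothesis cub : cubic H.
Hypothesis H3 : #|crossing S| = 3.

Let G1 := split3_graph S.
Let G2 := split3_graph (~: S).
Let H3' : #|crossing (~: S)| = 3. Proof. by rewrite cross_compl. Qed.

Definition I3 := {e : edge H | e \in crossing S}.
Definition io1 (i : I3) : edge G1 := Sub (val i) (cross_end (valP i)).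
Definition io2 (i : I3) : edge G2 := Sub (val i) (cross_end2 (valP i)).

Let phi1 := fun x : edge G1 => val x.
Let phi2 := fun x : edge G2 => val x.

Definition glue3 (c1 : coloring G1) (c2 : coloring G2) : coloring H :=
  [ffun e => match @insub _ _ (edge G1) e with
             | Some x => c1 x
             | None => match @insub _ _ (edge G2) e with Some y => c2 y | None => ord0 end
             end].

Lemma glue3P (c1 : coloring G1) (c2 : coloring G2) : prop c1 -> prop c2 ->
  (forall i, c1 (io1 i) = c2 (io2 i)) ->
  exists c, [/\ prop c, restr phi1 c = c1 & restr phi2 c = c2].
Proof.
move=> P1 P2 Hc.
have R1 : restr phi1 (glue3 c1 c2) = c1.
  by apply/ffunP => x; rewrite !ffunE /phi1 valK.
have R2 : restr phi2 (glue3 c1 c2) = c2.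
  apply/ffunP => y; rewrite !ffunE /phi2.
  case: insubP => [x Px Ex|Nx]; last by rewrite valK.

  have Cy : val y \in crossing S.
    move: Px (valP y) => /=; rewrite !inE.
    by case: (src (val y) \in S); case: (tgt (val y) \in S).
  have := Hc (Sub (val y) Cy).
  have -> : io1 (Sub (val y) Cy) = x by apply: val_inj; rewrite /= Ex.
  have -> : io2 (Sub (val y) Cy) = y by apply: val_inj.
  done.
exists (glue3 c1 c2); split => //.
apply/properP => e f nef aef.
have key : forall p, (p == src e) || (p == tgt e) -> (p == src f) || (p == tgt f) ->
    glue3 c1 c2 e != glue3 c1 c2 f.
  move=> p Ee Ef; case: (boolP (p \in S)) => pS.
    exact: (side3_prop P1 R1 nef pS).
  by apply: (side3_prop P2 R2 nef _ Ee Ef); rewrite inE.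
case/or4P: aef => /eqP E.
- by apply: (key (src e)); rewrite -?E eqxx ?orbT.
- by apply: (key (src e)); rewrite -?E eqxx ?orbT.
- by apply: (key (tgt e)); rewrite -?E eqxx ?orbT.
- by apply: (key (tgt e)); rewrite -?E eqxx ?orbT.
Qed.

Lemma cover3 e : (exists e1 : edge G1, e = phi1 e1) \/ (exists e2 : edge G2, e = phi2 e2).
Proof.
case: (boolP ((src e \in S) || (tgt e \in S))) => p.
  by left; exists (Sub e p : edge G1).
have p' : (src e \in ~: S) || (tgt e \in ~: S).
  by move: p; rewrite !inE; case: (src e \in S); case: (tgt e \in S).
by right; exists (Sub e p' : edge G2).
Qed.

Lemma adjio1 i j : i != j -> (io1 i != io1 j) && adjacent (io1 i) (io1 j).
Proof.
move=> nij; apply/andP; split.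
  by apply: contra nij => /eqP E; apply/eqP/val_inj; move: (congr1 val E).
by apply: adj_cross; [exact: (valP i) | exact: (valP j)].
Qed.

Lemma adjio2 i j : i != j -> (io2 i != io2 j) && adjacent (io2 i) (io2 j).
Proof.
move=> nij; apply/andP; split.
  by apply: contra nij => /eqP E; apply/eqP/val_inj; move: (congr1 val E).
by apply: adj_cross; rewrite /= cross_compl; [exact: (valP i) | exact: (valP j)].
Qed.

Lemma cut3_K : Kprime H = Kprime G1 * Kprime G2.
Proof.
have [i0 _] : exists i : I3, true.
  have : 0 < #|crossing S| by rewrite H3.
  by case/card_gt0P => e He; exists (Sub e He).
apply: (@Kprime_split H G1 G2 phi1 phi2 I3 io1 io2 i0).
- exact: r3_proper cub H3.
- exact: r3_proper cub H3'.
- by [].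
- exact: glue3P.
- exact: cover3.
- exact: adjio1.
- exact: adjio2.
Qed.

End Cut3Inst.

Lemma uniq_end (H : mgraph) (T : {set vert H}) e u w : e \in crossing T ->
  is_end e u -> is_end e w -> u \in T -> w \in T -> u = w.
Proof.
rewrite inE /is_end => C Eu Ew uT wT.
case/orP: Eu => /eqP Eu; case/orP: Ew => /eqP Ew; subst => //.
- by move: C; rewrite uT wT.
- by move: C; rewrite uT wT.
Qed.

Lemma cross_not_int (H : mgraph) (T : {set vert H}) e : e \in crossing T ->
  ~~ ((src e \in T) && (tgt e \in T)).
Proof. by rewrite inE; case: (src e \in T); case: (tgt e \in T). Qed.

Section Side2.
Variables (H : mgraph) (T : {set vert H}) (e1 e2 : edge H) (x1 x2 : {x | x \in T}).
Hypotheses (ne : e1 != e2) (HT : crossing T = [set e1; e2]).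
Hypotheses (E1 : is_end e1 (val x1)) (E2 : is_end e2 (val x2)) (nx : x1 != x2).
Notation G1 := (split2_graph x1 x2).

Definition phi2g (e0 : edge H) (x : edge G1) : edge H := if x is Some a then val a else e0.

Lemma e1C : e1 \in crossing T. Proof. by rewrite HT !inE eqxx. Qed.
Lemma e2C : e2 \in crossing T. Proof. by rewrite HT !inE eqxx orbT. Qed.

Lemma sub_eq (p q : vert H) (pT : p \in T) (qT : q \in T) :
  ((Sub p pT : {x | x \in T}) == Sub q qT) = (p == q).
Proof. by rewrite -(inj_eq val_inj). Qed.

Lemma view (c : coloring H) (c1 : coloring G1) :
  (forall a, c (val a) = c1 (Some a)) -> c e1 = c1 None -> c e2 = c1 None ->
  forall e p (pT : p \in T), is_end e p -> exists x : edge G1,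
   [/\ c e = c1 x, (src x == Sub p pT) || (tgt x == Sub p pT) &
       match x with Some a => val a = e
       | None => ((e == e1) && (p == val x1)) || ((e == e2) && (p == val x2)) end].
Proof.
move=> Ca C1 C2 e p pT Ep.
case: (boolP ((src e \in T) && (tgt e \in T))) => [int|nint].
  exists (Some (Sub e int)); split => //; first by rewrite -Ca.
have Ce : e \in crossing T.
  move: Ep nint; rewrite inE /is_end.
  by case/orP => /eqP ->; rewrite pT /=; case: (_ \in T).
move: Ce; rewrite HT !inE => /orP[]/eqP Ee; subst e.
- have Ep1 := uniq_end e1C Ep E1 pT (valP x1).
  exists None; split => //; last by rewrite eqxx Ep1 eqxx.
  by apply/orP; left; apply/eqP/val_inj; rewrite /= Ep1.
- have Ep2 := uniq_end e2C Ep E2 pT (valP x2).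
  exists None; split => //; last by rewrite Ep2 !eqxx orbT.
  by apply/orP; right; apply/eqP/val_inj; rewrite /= Ep2.
Qed.

Lemma side2_prop (c : coloring H) (c1 : coloring G1) : prop c1 ->
  (forall a, c (val a) = c1 (Some a)) -> c e1 = c1 None -> c e2 = c1 None ->
  forall e f p, e != f -> p \in T -> is_end e p -> is_end f p -> c e != c f.
Proof.
move=> P1 Ca C1 C2 e f p nef pT Ep Fp.
have [x [Cx Ex Vx]] := view Ca C1 C2 pT Ep.
have [y [Cy Ey Vy]] := view Ca C1 C2 pT Fp.
rewrite Cx Cy.
case: (eqVneq x y) => [Exy|nxy]; last first.
  apply: (properP _ P1) => //.
  by rewrite /adjacent; case/orP: Ex => /eqP ->; case/orP: Ey => /eqP ->; rewrite eqxx ?orbT.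
exfalso; subst y.
case: x Cx Ex Vx Cy Ey Vy => [a|] _ _ Vx _ _ Vy.
  by move: nef; rewrite -Vx -Vy eqxx.
case/orP: Vx => /andP[/eqP Ee /eqP Pe]; case/orP: Vy => /andP[/eqP Ef /eqP Pf].
all: first [by move: nef; rewrite Ee Ef eqxx | by move: nx; rewrite -(inj_eq val_inj) -Pe -Pf eqxx].
Qed.

Hypothesis cub : cubic H.

Lemma r2_proper (e0 : edge H) (c : coloring H) : e0 \in [set e1; e2] -> prop c ->
  prop (restr (phi2g e0) c).
Proof.
move=> He0 Pc.
have c12 := cut2_eq cub Pc HT ne.
have Ce0 : c e0 = c e1 by move: He0; rewrite !inE => /orP[]/eqP->.
have key : forall b : {e | (src e \in T) && (tgt e \in T)},
    adjacent (None : edge G1) (Some b) -> c e0 != c (val b).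
  move=> b; rewrite /adjacent /= -!(inj_eq val_inj) /= => A.
  have nb1 : e1 != val b.
    by apply: contraNneq (cross_not_int e1C) => ->; apply: (valP b).
  have nb2 : e2 != val b.
    by apply: contraNneq (cross_not_int e2C) => ->; apply: (valP b).
  move: E1 E2; rewrite /is_end /= Ce0 => F1 F2.
  case/or4P: A => /eqP A.
  - apply: (properP _ Pc) nb1 _; rewrite /adjacent.
    by case/orP: F1 => /eqP ->; rewrite A eqxx ?orbT.
  - apply: (properP _ Pc) nb1 _; rewrite /adjacent.
    by case/orP: F1 => /eqP ->; rewrite A eqxx ?orbT.
  - rewrite c12; apply: (properP _ Pc) nb2 _; rewrite /adjacent.
    by case/orP: F2 => /eqP ->; rewrite A eqxx ?orbT.
  - rewrite c12; apply: (properP _ Pc) nb2 _; rewrite /adjacent.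
    by case/orP: F2 => /eqP ->; rewrite A eqxx ?orbT.
apply/properP => x y nxy Axy; rewrite !ffunE.
case: x y nxy Axy => [a|] [b|] //= nab Aab.
- apply: (properP _ Pc).
    by apply: contra nab => /eqP E; apply/eqP; congr Some; apply: val_inj.
  move: Aab; rewrite /adjacent /= -!(inj_eq val_inj) /=.
  by [].
- by rewrite eq_sym; apply: key; rewrite adjC.
- exact: key.
Qed.

Lemma cubic2 : cubic G1.
Proof.
have [ll deg] := cub.
split.
  case => [a|] /=; last by [].
  by rewrite -(inj_eq val_inj) /= (ll (val a)).
move=> v.
pose g (x : edge G1) : edge H := if x is Some a then val a else (if v == x1 then e1 else e2).
have nb : forall (b : {e | (src e \in T) && (tgt e \in T)}), (val b != e1) && (val b != e2).
  move=> b; apply/andP; split.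
    by apply: contraNneq (cross_not_int e1C) => <-; apply: (valP b).
  by apply: contraNneq (cross_not_int e2C) => <-; apply: (valP b).
rewrite -(deg (val v)) -(card_in_imset (f := g)); last first.
  move=> [a|] [b|] _ _ //=.
  - by move=> E; congr Some; apply: val_inj.
  - by have /andP[n1 n2] := nb a; case: (v == x1) => E; [move: n1|move: n2]; rewrite /= E eqxx.
  - by have /andP[n1 n2] := nb b; case: (v == x1) => E; [move: n1|move: n2]; rewrite /= -E eqxx.
apply: eq_card => e; apply/imsetP/idP.
  case=> -[a|] Hx ->; rewrite !inE /= in Hx *.
    by rewrite -!(inj_eq val_inj) in Hx.
  case: (eqVneq v x1) => [Ev|nv].
    by move: E1; rewrite /is_end Ev.
  have Ev : v = x2 by move: Hx; rewrite (eq_sym x1) (negbTE nv) /= => /eqP.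
  by move: E2; rewrite /is_end Ev.
rewrite inE => He.
case: (boolP ((src e \in T) && (tgt e \in T))) => [int|nint].
  exists (Some (Sub e int)) => //.
  by rewrite inE /= -!(inj_eq val_inj).
have Ce : e \in crossing T.
  move: He nint; rewrite inE.
  by case/orP => /eqP ->; rewrite (valP v) /=; case: (_ \in T).
move: Ce; rewrite HT !inE => /orP[]/eqP Ee; subst e.
- have Ev : v = x1 by apply: val_inj; exact: (uniq_end e1C He E1 (valP v) (valP x1)).
  by exists None; rewrite ?inE /= ?Ev ?eqxx.
- have Ev : v = x2 by apply: val_inj; exact: (uniq_end e2C He E2 (valP v) (valP x2)).
  exists None; first by rewrite inE /= Ev eqxx orbT.
  by rewrite /= Ev eq_sym (negbTE nx).
Qed.

End Side2.

Lemma ends_neq (H : mgraph) (T : {set vert H}) e1 e2 (x1 x2 : {x | x \in T}) (c : coloring H) :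
  cubic H -> prop c -> e1 != e2 -> crossing T = [set e1; e2] ->
  is_end e1 (val x1) -> is_end e2 (val x2) -> x1 != x2.
Proof.
move=> cub Pc ne HT E1 E2; apply/eqP => Ex.
have := cut2_eq cub Pc HT ne.
have : c e1 != c e2.
  apply: (properP _ Pc) ne _; move: E1 E2; rewrite /is_end Ex /adjacent.
  by case/orP => /eqP ->; case/orP => /eqP ->; rewrite eqxx ?orbT.
by move/eqP.
Qed.

Section Cut2Inst.
Variables (H : mgraph) (S : {set vert H}) (e1 e2 : edge H).
Variables (x1 x2 : {x | x \in S}) (y1 y2 : {x | x \in ~: S}).
Hypotheses (cub : cubic H) (ne : e1 != e2) (HT : crossing S = [set e1; e2]).
Hypotheses (E1x : is_end e1 (val x1)) (E2x : is_end e2 (val x2)).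
Hypotheses (E1y : is_end e1 (val y1)) (E2y : is_end e2 (val y2)).
Variable c0 : coloring H.
Hypothesis P0 : prop c0.

Let HT' : crossing (~: S) = [set e1; e2]. Proof. by rewrite cross_compl. Qed.
Let nx : x1 != x2. Proof. exact: ends_neq cub P0 ne HT E1x E2x. Qed.
Let ny : y1 != y2. Proof. exact: ends_neq cub P0 ne HT' E1y E2y. Qed.

Let G1 := split2_graph x1 x2.
Let G2 := split2_graph y1 y2.
Let phi1 := phi2g (x1:=x1) (x2:=x2) e1.
Let phi2 := phi2g (x1:=y1) (x2:=y2) e2.
Let io1 (i : unit) : edge G1 := None.
Let io2 (i : unit) : edge G2 := None.

Definition glue2 (c1 : coloring G1) (c2 : coloring G2) : coloring H :=
  [ffun e => match @insub _ (fun e => (src e \in S) && (tgt e \in S))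
                      {e | (src e \in S) && (tgt e \in S)} e with
             | Some a => c1 (Some a)
             | None => match @insub _ (fun e => (src e \in ~: S) && (tgt e \in ~: S))
                      {e | (src e \in ~: S) && (tgt e \in ~: S)} e with
                       | Some b => c2 (Some b) | None => c1 None end
             end].

Lemma e1S : e1 \in crossing S. Proof. by rewrite HT !inE eqxx. Qed.
Lemma e2S : e2 \in crossing S. Proof. by rewrite HT !inE eqxx orbT. Qed.
Lemma e1S' : e1 \in crossing (~: S). Proof. by rewrite cross_compl e1S. Qed.
Lemma e2S' : e2 \in crossing (~: S). Proof. by rewrite cross_compl e2S. Qed.

Lemma glue2P (c1 : coloring G1) (c2 : coloring G2) : prop c1 -> prop c2 ->
  (forall i, c1 (io1 i) = c2 (io2 i)) ->
  exists c, [/\ prop c, restr phi1 c = c1 & restr phi2 c = c2].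
Proof.
move=> P1 P2 Hc; have Hn := Hc tt; rewrite /io1 /io2 in Hn.
set c := glue2 c1 c2.
have Ce1 : c e1 = c1 None.
  rewrite /c ffunE insubF ?insubF //; [exact: negbTE (cross_not_int e1S') | exact: negbTE (cross_not_int e1S)].
have Ce2 : c e2 = c1 None.
  rewrite /c ffunE insubF ?insubF //; [exact: negbTE (cross_not_int e2S') | exact: negbTE (cross_not_int e2S)].
have Ca : forall a : {e | (src e \in S) && (tgt e \in S)}, c (val a) = c1 (Some a).
  by move=> a; rewrite /c ffunE valK.
have Cb : forall b : {e | (src e \in ~: S) && (tgt e \in ~: S)}, c (val b) = c2 (Some b).
  move=> b; rewrite /c ffunE insubF ?valK //.
  by move: (valP b); rewrite !inE; case: (src _ \in S).
have R1 : restr phi1 c = c1.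
  by apply/ffunP => -[a|]; rewrite ffunE /phi1 /= ?Ca ?Ce1.
have R2 : restr phi2 c = c2.
  by apply/ffunP => -[b|]; rewrite ffunE /phi2 /= ?Cb ?Ce2.
exists c; split => //.
apply/properP => e f nef aef.
have key : forall p, is_end e p -> is_end f p -> c e != c f.
  move=> p Ep Fp; case: (boolP (p \in S)) => pS.
    exact: (side2_prop HT E1x E2x nx P1 Ca Ce1 Ce2 nef pS).
  have pS' : p \in ~: S by rewrite inE.
  have Ce1' : c e1 = c2 None by rewrite Ce1.
  have Ce2' : c e2 = c2 None by rewrite Ce2.
  exact: (side2_prop HT' E1y E2y ny P2 Cb Ce1' Ce2' nef pS').
rewrite /is_end in key.
case/or4P: aef => /eqP E.
- by apply: (key (src e)); rewrite -?E eqxx ?orbT.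
- by apply: (key (src e)); rewrite -?E eqxx ?orbT.
- by apply: (key (tgt e)); rewrite -?E eqxx ?orbT.
- by apply: (key (tgt e)); rewrite -?E eqxx ?orbT.
Qed.

Lemma cover2 e : (exists x : edge G1, e = phi1 x) \/ (exists y : edge G2, e = phi2 y).
Proof.
case: (boolP ((src e \in S) && (tgt e \in S))) => [int|nint].
  by left; exists (Some (Sub e int)).
case: (boolP ((src e \in ~: S) && (tgt e \in ~: S))) => [int'|nint'].
  by right; exists (Some (Sub e int')).
have : e \in crossing S.
  move: nint nint'; rewrite !inE.
  by case: (src e \in S); case: (tgt e \in S).
rewrite HT !inE => /orP[]/eqP ->.
  by left; exists None.
by right; exists None.
Qed.

Lemma cut2_K : Kprime H = Kprime G1 * Kprime G2.
Proof.
apply: (@Kprime_split H G1 G2 phi1 phi2 unit io1 io2 tt).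
- move=> c Pc; apply: (r2_proper ne HT E1x E2x cub _ Pc).
  by rewrite !inE eqxx.
- move=> c Pc; apply: (r2_proper ne HT' E1y E2y cub _ Pc).
  by rewrite !inE eqxx orbT.
- by move=> c Pc i; rewrite /phi1 /phi2 /= (cut2_eq cub Pc HT ne).
- exact: glue2P.
- exact: cover2.
- by case; case.
- by case; case.
Qed.

Lemma cubic_G1 : cubic G1. Proof. exact: (cubic2 HT E1x E2x nx cub). Qed.
Lemma cubic_G2 : cubic G2. Proof. exact: (cubic2 HT' E1y E2y ny cub). Qed.

End Cut2Inst.

Lemma split_step (H H1 H2 : mgraph) : cubic H -> three_edge_colorable H ->
  nontrivial_split H H1 H2 ->
  [/\ Kprime H = Kprime H1 * Kprime H2, cubic H1 /\ three_edge_colorable H1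
    & cubic H2 /\ three_edge_colorable H2].
Proof.
move=> cub [c0 P0] [[C2|C3] _].
  case: C2 => S [e1 [e2 [x1 [x2 [y1 [y2 [ne HT /andP[E1x E2x] /andP[E1y E2y] [-> ->]]]]]]]].
  have HT' : crossing (~: S) = [set e1; e2] by rewrite cross_compl.
  split.
  - exact: (cut2_K cub ne HT E1x E2x E1y E2y P0).
  - split; first exact: (cubic_G1 cub ne HT E1x E2x P0).
    exists (restr (phi2g (x1:=x1) (x2:=x2) e1) c0).
    by apply: (r2_proper ne HT E1x E2x cub _ P0); rewrite !inE eqxx.
  - split; first exact: (cubic_G2 cub ne HT E1y E2y P0).
    exists (restr (phi2g (x1:=y1) (x2:=y2) e2) c0).
    by apply: (r2_proper ne HT' E1y E2y cub _ P0); rewrite !inE eqxx orbT.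
case: C3 => S [H3 [-> ->]].
have H3' : #|crossing (~: S)| = 3 by rewrite cross_compl.
split.
- exact: cut3_K.
- split; first exact: cubic3.
  by exists (restr (fun x : edge (split3_graph S) => val x) c0); apply: r3_proper.
- split; first exact: cubic3.
  by exists (restr (fun x : edge (split3_graph (~: S)) => val x) c0); apply: r3_proper.
Qed.

Theorem theorem13 (G : mgraph) (L : seq mgraph) :
  cubic G -> three_edge_colorable G -> decomposition G L ->
  Kprime G = (\prod_(H <- L) Kprime H)%N.
Proof.
move=> cub col D.
suff : (forall H, List.In H L -> cubic H /\ three_edge_colorable H) /\
       Kprime G = (\prod_(H <- L) Kprime H)%N by case.
elim: D => [|L1 L2 H H1 H2 _ [IH1 IH2] NS].
  by split; [move=> H [<- //|[]] | rewrite big_seq1].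
have [cH colH] : cubic H /\ three_edge_colorable H.
  by apply: IH1; apply: List.in_or_app; right; left.
have [EK [c1 k1] [c2 k2]] := split_step cH colH NS.
split.
  move=> H' Hin; case: (List.in_app_or _ _ _ Hin) => [HL|[<-|[<-|HL]]] //.
  - by apply: IH1; apply: List.in_or_app; left.
  - by apply: IH1; apply: List.in_or_app; right; right.
by rewrite IH2 !big_cat !big_cons /= EK -mulnA.
Qed.
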